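(* Let $K\ge1$, $T\ge1$ and $\ell_1,\dots,\ell_T\in[0,1]^K$. For $t\ge1$ let $c_t=1$ if $t=1$ or if there exists an expert $k$ such that $L_{t-1,k}=L^*_{t-1}$ while $L_{t,k}\ne L^*_t$, and $c_t=0$ otherwise; let $C_T=\sum_{t=1}^Tc_t$. Then the regret of Follow-the-Leader satisfies \[ \mathcal{R}^{\mathrm{ftl}}_T=\Delta^{(\infty)}_T\le C_T. \]
   Context: Hedge setting: $K$ experts; $L_{t,k}=\sum_{s=1}^t\ell_{s,k}$ ($L_{0,k}=0$), $L^*_t=\min_kL_{t,k}$. Follow-the-Leader (Hedge with learning rate $\infty$) plays in round $t$ the weights $w_t$ uniform on $\{k:L_{t-1,k}=L^*_{t-1}\}$, suffering $h_t=\sum_kw_{t,k}\ell_{t,k}$; its regret is $\mathcal{R}^{\mathrm{ftl}}_T=\sum_{t\le T}h_t-L^*_T$. Its mix loss is $m_t=L^*_t-L^*_{t-1}$, mixability gap $\delta^{(\infty)}_t=h_t-m_t$, and $\Delta^{(\infty)}_T=\sum_{t=1}^T\delta^{(\infty)}_t$. *)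

(* Defs.v *)
From HB Require Import structures.
From mathcomp Require Import all_boot all_order all_algebra.
Set Implicit Arguments. Unset Strict Implicit. Unset Printing Implicit Defensive.
Import Order.TTheory GRing.Theory Num.Theory.
Local Open Scope ring_scope.

Section Hedge.
Variables (R : realFieldType) (K : nat).
(* losses: ell t k = loss of expert k in round t (rounds t = 1, 2, ...) *)
Variable ell : nat -> 'I_K -> R.

Definition cumL (t : nat) (k : 'I_K) : R := \sum_(1 <= s < t.+1) ell s k.

(* L*_t = min_k L_{t,k}  (the head default is irrelevant when K >= 1) *)
Definition Lstar (t : nat) : R :=
  let s := [seq cumL t k | k <- enum 'I_K] in foldr Num.min (head 0 s) s.

Definition leaders (t : nat) : {set 'I_K} :=
  [set k | cumL t.-1 k == Lstar t.-1].

Definition ftl_w (t : nat) (k : 'I_K) : R :=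
  if k \in leaders t then (#|leaders t|%:R)^-1 else 0.

Definition ftl_h (t : nat) : R := \sum_k ftl_w t k * ell t k.

Definition ftl_regret (T : nat) : R := \sum_(1 <= t < T.+1) ftl_h t - Lstar T.

Definition ftl_m (t : nat) : R := Lstar t - Lstar t.-1.
Definition ftl_delta (t : nat) : R := ftl_h t - ftl_m t.
Definition ftl_Delta (T : nat) : R := \sum_(1 <= t < T.+1) ftl_delta t.

Definition leader_change (t : nat) : bool :=
  (t == 1)%N ||
  [exists k : 'I_K, (cumL t.-1 k == Lstar t.-1) && (cumL t k != Lstar t)].
Definition C_count (T : nat) : R := \sum_(1 <= t < T.+1) (leader_change t)%:R.
End Hedge.

(* Main.v *)
Require Import Defs.
From HB Require Import structures.
From mathcomp Require Import all_boot all_order all_algebra.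
Import Order.TTheory GRing.Theory Num.Theory.
Local Open Scope ring_scope.

Lemma foldr_min_le (R : realFieldType) (s : seq R) x0 :
  forall x, x \in s -> foldr Num.min x0 s <= x.
Proof.
elim: s => [//|a s IH] x /=; rewrite in_cons => /orP[/eqP->|xs].
  by rewrite ge_min lexx.
by rewrite ge_min IH // orbT.
Qed.

Lemma foldr_min_in (R : realFieldType) (s : seq R) x0 :
  foldr Num.min x0 s = x0 \/ foldr Num.min x0 s \in s.
Proof.
elim: s => [|a s IH] /=; first by left.
case: (leP a (foldr Num.min x0 s)) => _.
  by right; rewrite mem_head.
by case: IH => [->|h]; [left|right; rewrite in_cons h orbT].
Qed.

Section L.
Variables (R : realFieldType) (K : nat) (ell : nat -> 'I_K -> R).
Hypothesis K1 : (1 <= K)%N.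

Lemma Lstar_le t k : Lstar ell t <= cumL ell t k.
Proof.
rewrite /Lstar; apply: foldr_min_le; apply/mapP; exists k => //; exact: mem_enum.
Qed.

Lemma Lstar_ex t : exists k, cumL ell t k = Lstar ell t.
Proof.
have k0 : 'I_K by exists 0%N.
rewrite /Lstar.
set s := [seq cumL ell t k | k <- enum 'I_K].
have hs : head 0 s \in s.
  rewrite /s; case E: (enum 'I_K) => [|a l] /=.
    by move: (mem_enum predT k0); rewrite E.
  by rewrite mem_head.
have : foldr Num.min (head 0 s) s \in s by case: (@foldr_min_in _ s (head 0 s)) => [->|].
by case/mapP => k _ ->; exists k.
Qed.

Lemma cumLS t k : cumL ell t.+1 k = cumL ell t k + ell t.+1 k.
Proof. by rewrite /cumL big_nat_recr. Qed.

Lemma Lstar0 : Lstar ell 0 = 0.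
Proof.
have [k hk] := Lstar_ex 0; by rewrite -hk /cumL big_geq.
Qed.

Lemma h_eq t : ftl_h ell t =
  (#|leaders ell t|%:R)^-1 * \sum_(k in leaders ell t) ell t k.
Proof.
rewrite /ftl_h mulr_sumr [RHS]big_mkcond /=; apply: eq_bigr => k _.
by rewrite /ftl_w; case: ifP => _; rewrite ?mul0r.
Qed.

Lemma leaders_card t : (0 < #|leaders ell t|)%N.
Proof.
have [k hk] := Lstar_ex t.-1; apply/card_gt0P; exists k.
by rewrite inE hk.
Qed.

Lemma telesc T : \sum_(1 <= t < T.+1) (Lstar ell t - Lstar ell t.-1)
  = Lstar ell T - Lstar ell 0.
Proof.
elim: T => [|T IH]; first by rewrite big_geq // subrr.
rewrite big_nat_recr //= IH; by rewrite addrC addrA subrK.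
Qed.
End L.

Theorem lemma9 (R : realFieldType) (K T : nat) (ell : nat -> 'I_K -> R) :
  (1 <= K)%N -> (1 <= T)%N ->
  (forall t k, (1 <= t <= T)%N -> 0 <= ell t k <= 1) ->
  ftl_regret ell T = ftl_Delta ell T /\ ftl_Delta ell T <= C_count ell T.
Proof.
move=> K1 T1 hb; split.
  rewrite /ftl_regret /ftl_Delta /ftl_delta /ftl_m sumrB telesc Lstar0 //.
  by rewrite subr0.
apply: ler_sum_nat => t /andP[t1 tT].
have tT' : (1 <= t <= T)%N by rewrite t1 -ltnS tT.
case: t t1 tT tT' => [//|t] _ _ tT'.
have hn := leaders_card _ _ ell K1 t.+1.
set L := leaders ell t.+1 in hn *.
have nz : (#|L|%:R : R) != 0 by rewrite pnatr_eq0 -lt0n.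
rewrite /ftl_delta /ftl_m /= h_eq.
case: (boolP (leader_change ell t.+1)) => hc /=.
  have hm : 0 <= Lstar ell t.+1 - Lstar ell t.
    have [k hk] := Lstar_ex _ _ ell K1 t.+1.
    rewrite subr_ge0 -hk cumLS; apply: (le_trans (Lstar_le _ _ _ _ k)).
    by rewrite lerDl; case/andP: (hb t.+1 k tT').
  apply: (le_trans (y := (#|L|%:R)^-1 * \sum_(k in L) ell t.+1 k)).
    by rewrite lerBlDr lerDl.
  apply: (le_trans (y := (#|L|%:R)^-1 * \sum_(k in L) (1 : R))).
    rewrite ler_wpM2l ?invr_ge0 ?ler0n //; apply: ler_sum => k _.
    by case/andP: (hb t.+1 k tT').
  by rewrite sumr_const -mulr_natr mulVf // mul1r.
have hl : forall k, k \in L -> ell t.+1 k = Lstar ell t.+1 - Lstar ell t.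
  move=> k; rewrite inE /= => /eqP hk.
  move: hc; rewrite /leader_change => /norP[_ /existsPn /(_ k)].
  rewrite negb_and /= hk eqxx /= negbK => /eqP h2.
  by rewrite -h2 -hk cumLS addrC addKr.
rewrite (eq_bigr _ hl) sumr_const -(mulr_natl (Lstar ell t.+1 - _)) mulrA mulVf // mul1r.
by rewrite subrr.
Qed.
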